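(* Let $\varphi\colon\mathbb{R}\to(-\infty,+\infty]$ be a proper convex lower semi-continuous function with $\varphi(0)<+\infty$. Then at every $p\in\mathbb{R}$ where the right derivatives are defined, $(\varphi_\uparrow^* )'_+(p)=\max\{0,(\varphi^* )'_+(p)\}$.
   Context: $\varphi_\uparrow(x)=\varphi(x)$ for $x\ge0$ and $+\infty$ for $x<0$. $g^*(p)=\sup_{x\in\mathbb{R}}\{xp-g(x)\}$ is the convex conjugate, and $g'_+(x)=\lim_{h\downarrow0}(g(x+h)-g(x))/h$ is the right derivative. *)

(* Defs.v *)
From HB Require Import structures.
From mathcomp Require Import all_boot all_order all_algebra.
From mathcomp Require Import all_classical all_reals all_analysis.
Set Implicit Arguments. Unset Strict Implicit. Unset Printing Implicit Defensive.
Import Order.TTheory GRing.Theory Num.Theory.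
Import numFieldNormedType.Exports.
Local Open Scope classical_set_scope.
Local Open Scope ring_scope.
Local Open Scope ereal_scope.

Section defs.
Context {R : realType}.

Definition proper_fun (f : R -> \bar R) : Prop :=
  (forall x, f x != -oo) /\ (exists x, f x != +oo).

Definition convex_efun (f : R -> \bar R) : Prop :=
  forall (x y t : R), (0 < t < 1)%R ->
    f (t * x + (1 - t) * y)%R <= t%:E * f x + (1 - t)%:E * f y.

Definition lsc_efun (f : R -> \bar R) : Prop :=
  forall (x a : R), a%:E < f x -> \forall y \near x, a%:E < f y.

Definition phi_up (f : R -> \bar R) : R -> \bar R :=
  fun x => if (0 <= x)%R then f x else +oo.

Definition conj_fun (g : R -> \bar R) : R -> \bar R :=
  fun p => ereal_sup [set (x * p)%:E - g x | x in [set: R]].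

Definition has_rderiv (g : R -> \bar R) (p : R) (l : \bar R) : Prop :=
  g p \is a fin_num /\
  ((g (p + h)%R - g p) * (h^-1)%:E) @[h --> (0:R)^'+] --> l.

End defs.

(* Main.v *)
Require Import Defs.
From HB Require Import structures.
From mathcomp Require Import all_boot all_order all_algebra.
From mathcomp Require Import all_classical all_reals all_analysis.
From mathcomp Require Import lra ring.
Import Order.TTheory GRing.Theory Num.Theory.
Local Open Scope classical_set_scope.
Local Open Scope ring_scope.

Lemma key_ineq (R : realType) (x x1 p h F0 F1 Fx G d: R) :
  (0 < x)%R -> (x1 < 0)%R -> (0 < h)%R -> (h < d/(-x1))%R ->
  d = (x1 * p - F1 - G)%R -> (-F0 <= G)%R ->
  (F0 <= x/(x-x1)*F1 + (1 - x/(x-x1))*Fx)%R -> (x * (p+h) - Fx <= G)%R.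
Proof.
move=> x0 x10 h0 hd dE F0G cv.
have xx1 : (0 < x - x1)%R by lra.
have hd' : (-x1*h < d)%R by rewrite -ltr_pdivlMl ?oppr_gt0 // mulrC.
have cv' : ((x-x1)*F0 <= x*F1 - x1*Fx)%R.
  have -> : (x*F1 - x1*Fx = (x-x1)*(x/(x-x1)*F1 + (1 - x/(x-x1))*Fx))%R.
    by field; rewrite gt_eqF.
  by rewrite ler_wpM2l // ltW.
have h1 : (x * (-x1*h - d) <= 0)%R by rewrite pmulr_rle0 //; lra.
have h2 : ((x-x1) * (-F0 - G) <= 0)%R by rewrite pmulr_rle0 //; lra.
have : ((-x1) * (x*(p+h) - Fx - G) <= 0)%R by rewrite dE in h1; nra.
rewrite pmulr_rle0 ?oppr_gt0 //; lra.
Qed.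

Lemma comb0 (R : realType) (x x1 : R) : (0 < x)%R -> (x1 < 0)%R ->
  (x / (x - x1) * x1 + (1 - x / (x - x1)) * x = 0)%R.
Proof. by move=> xp x1n; field; rewrite gt_eqF // subr_gt0 (lt_trans x1n xp). Qed.

Local Open Scope ereal_scope.

Theorem lemma5 (R : realType) (phi : R -> \bar R) :
  proper_fun phi -> convex_efun phi -> lsc_efun phi -> phi 0%R < +oo ->
  forall (p : R) (a b : \bar R),
    has_rderiv (conj_fun phi) p a ->
    has_rderiv (conj_fun (phi_up phi)) p b ->
    b = maxe 0 a.
Proof.
move=> [phiNoo _] cvx _ phi0 p a b [fpfin Ha] [gpfin Hb].
set f := conj_fun phi in fpfin Ha *.
set g := conj_fun (phi_up phi) in gpfin Hb *.
have fge x q : (x * q)%:E - phi x <= f q.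
  by apply: ereal_sup_ubound; exists x.
have fle q y : (forall x, (x * q)%:E - phi x <= y) -> f q <= y.
  by move=> H; apply: ge_ereal_sup => _ [x _ <-].
have gge x q : (0 <= x)%R -> (x * q)%:E - phi x <= g q.
  by move=> x0; apply: ereal_sup_ubound; exists x => //; rewrite /phi_up x0.
have gle q y : (forall x, (0 <= x)%R -> (x * q)%:E - phi x <= y) -> g q <= y.
  move=> H; apply: ge_ereal_sup => _ [x _ <-]; rewrite /phi_up.
  by case: ifPn => [/H//|_]; rewrite addeNy leNye.
have mono x q r : (0 <= x)%R -> (q <= r)%R -> (x * q)%:E - phi x <= (x * r)%:E - phi x.
  by move=> x0 qr; apply: leeB => //; rewrite lee_fin ler_wpM2l.
have monoN x q r : (x <= 0)%R -> (q <= r)%R -> (x * r)%:E - phi x <= (x * q)%:E - phi x.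
  by move=> x0 qr; apply: leeB => //; rewrite lee_fin ler_wnM2l.
have gmono q r : (q <= r)%R -> g q <= g r.
  move=> qr; apply: gle => x x0; apply: le_trans (mono _ _ _ x0 qr) _; exact: gge.
have gf q : g q <= f q by apply: gle => x _; exact: fge.
have b0 : 0 <= b.
  apply: (cvge_to_ge Hb); near=> h.
  have h0 : (0 < h)%R by near: h; exact: nbhs_right_gt.
  apply: mule_ge0; last by rewrite lee_fin invr_ge0 ltW.
  by rewrite sube_ge0 ?gpfin // gmono // lerDl ltW.
have [fg|gf'] := leP (f p) (g p).
  have fgp : f p = g p by apply: le_anti; rewrite fg gf.
  have eqfg h : (0 < h)%R -> f (p + h)%R = g (p + h)%R.
    move=> h0; apply/eqP; rewrite eq_le gf andbT; apply: fle => x.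
    have [x0|x0] := leP 0%R x; first exact: gge.
    apply: le_trans (monoN x p (p + h)%R (ltW x0) _) _; first by rewrite lerDl ltW.
    apply: le_trans (fge x p) _; apply: le_trans fg _.
    by apply: gmono; rewrite lerDl ltW.
  have Hb' : ((f (p + h)%R - f p) * (h^-1)%:E) @[h --> (0:R)^'+] --> b.
    apply: cvg_trans Hb; apply: near_eq_cvg; near=> h.
    have h0 : (0 < h)%R by near: h; exact: nbhs_right_gt.
    by rewrite fgp eqfg.
  have -> : a = b by apply: (cvg_unique _ Ha Hb').
  by rewrite max_r.
have [_ [x1 _ <-] hx1] := ereal_sup_gt gf'.
have x1neg : (x1 < 0)%R.
  rewrite ltNge; apply/negP => x10; move: hx1; rewrite ltNge gge //.
have [G gE] : exists G, g p = G%:E by exists (fine (g p)); rewrite fineK.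
case E1: (phi x1) => [F1| |] in hx1; last by move: (phiNoo x1); rewrite E1.
  2: by move: hx1; rewrite addeNy ltNge leNye.
case E0: (phi 0%R) => [F0| |] in phi0; last by move: (phiNoo 0%R); rewrite E0.
  2: by rewrite ltxx in phi0.
have F0G : (- F0 <= G)%R.
  by have := gge 0%R p (lexx _); rewrite mul0r E0 gE -EFinB lee_fin sub0r.
set d := (x1 * p - F1 - G)%R.
have d0 : (0 < d)%R by move: hx1; rewrite gE -EFinB lte_fin /d; lra.
have gnear : \forall h \near (0:R)^'+, g (p + h)%R <= g p.
  near=> h.
  have h0 : (0 < h)%R by near: h; exact: nbhs_right_gt.
  have hd : (h < d / - x1)%R.
    by near: h; apply: nbhs_right_lt; rewrite divr_gt0 // oppr_gt0.
  apply: gle => x; rewrite le_eqVlt => /orP[/eqP<-|xpos].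
    by apply: le_trans (gge 0%R p (lexx _)); rewrite !mul0r.
  case Ex: (phi x) => [Fx| |]; last by move: (phiNoo x); rewrite Ex.
    2: by rewrite addeNy leNye.
  rewrite gE -EFinB lee_fin; apply: (@key_ineq R x x1 p h F0 F1 Fx G d xpos x1neg h0 hd erefl F0G).
  have t01 : (0 < x / (x - x1) < 1)%R.
    apply/andP; split; first by rewrite divr_gt0 //; lra.
    by rewrite ltr_pdivrMr; lra.
  have := cvx x1 x _ t01.
  have -> : (x / (x - x1) * x1 + (1 - x / (x - x1)) * x = 0 :> R)%R.
    exact: comb0.
  by rewrite E0 E1 Ex -!EFinM -EFinD lee_fin.
have fnear : \forall h \near (0:R)^'+, f (p + h)%R <= f p.
  near=> h.
  have h0 : (0 < h)%R by near: h; exact: nbhs_right_gt.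
  apply: fle => x.
  have [x0|x0] := leP 0%R x.
    apply: le_trans (gge x _ x0) _; apply: le_trans (gf p).
    by near: h; exact: gnear.
  apply: le_trans (monoN x p (p + h)%R (ltW x0) _) _; first by rewrite lerDl ltW.
  exact: fge.
have ble0 : b <= 0.
  apply: (cvge_to_le Hb); near=> h.
  have h0 : (0 < h)%R by near: h; exact: nbhs_right_gt.
  apply: mule_le0_ge0; last by rewrite lee_fin invr_ge0 ltW.
  by rewrite sube_le0; near: h; exact: gnear.
have ale0 : a <= 0.
  apply: (cvge_to_le Ha); near=> h.
  have h0 : (0 < h)%R by near: h; exact: nbhs_right_gt.
  apply: mule_le0_ge0; last by rewrite lee_fin invr_ge0 ltW.
  by rewrite sube_le0; near: h; exact: fnear.
have -> : b = 0 by apply: le_anti; rewrite ble0 b0.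
by rewrite max_l.
Unshelve. all: by end_near.
Qed.
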